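(* Let $\bm{a}=(\alpha_1,\dots,\alpha_m)$ be a basis vector of $\mathbb{F}_{q^m}$ over $\mathbb{F}_q$ and let $\varphi$ be an $\mathbb{F}_q$-linear automorphism of $\mathbb{F}_{q^m}$. Let $A$ be the $m\times m$ matrix over $\mathbb{F}_{q^m}$ whose $i$-th row is $\varphi(\alpha_i\bm{a})=(\varphi(\alpha_i\alpha_1),\dots,\varphi(\alpha_i\alpha_m))$. Then $\varphi$ is fully linear over $\mathbb{F}_{q^m}$ if and only if $A$ has rank $1$ over $\mathbb{F}_{q^m}$.
   Context: $q$ is a prime power (the paper takes $q$ a power of $2$). A basis vector of $\mathbb{F}_{q^m}$ over $\mathbb{F}_q$ is a vector in $\mathbb{F}_{q^m}^m$ whose components form an $\mathbb{F}_q$-basis of $\mathbb{F}_{q^m}$. An $\mathbb{F}_q$-linear automorphism of $\mathbb{F}_{q^m}$ is a bijective $\mathbb{F}_q$-linear map $\varphi:\mathbb{F}_{q^m}\to\mathbb{F}_{q^m}$, applied componentwise to vectors; for a set $\mathcal{V}\subseteq\mathbb{F}_{q^m}^n$, $\varphi(\mathcal{V})=\{\varphi(\bm{v}):\bm{v}\in\mathcal{V}\}$. For an $\mathbb{F}_{q^m}$-linear code $\mathcal{C}\subseteq\mathbb{F}_{q^m}^n$, $\varphi$ is called linear on $\mathcal{C}$ if $\varphi(\mathcal{C})$ is an $\mathbb{F}_{q^m}$-linear subspace of $\mathbb{F}_{q^m}^n$. $\varphi$ is called fully linear over $\mathbb{F}_{q^m}$ if it is linear on every $\mathbb{F}_{q^m}$-linear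 code $\mathcal{C}\subseteq\mathbb{F}_{q^m}^n$, for every length $n\ge1$. *)

(* Defs.v *)
From HB Require Import structures.
From mathcomp Require Import all_boot all_order all_algebra all_field.
Set Implicit Arguments. Unset Strict Implicit. Unset Printing Implicit Defensive.
Import GRing.Theory.
Local Open Scope ring_scope.

(* F plays the role of F_q (a finite field), L the role of F_{q^m}
   (a finite-dimensional field extension of F). *)

Definition is_Lsubspace (L : fieldType) (n : nat) (C : 'rV[L]_n -> Prop) :=
  C 0 /\ (forall (c : L) (u v : 'rV[L]_n), C u -> C v -> C (c *: u + v)).

Definition img_code (L : fieldType) (n : nat) (phi : L -> L)
    (C : 'rV[L]_n -> Prop) : 'rV[L]_n -> Prop :=
  fun w => exists2 v, C v & w = map_mx phi v.

Definition linear_on (L : fieldType) (n : nat) (phi : L -> L)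
    (C : 'rV[L]_n -> Prop) := is_Lsubspace (img_code phi C).

Definition fully_linear (L : fieldType) (phi : L -> L) :=
  forall (n : nat) (C : 'rV[L]_n -> Prop),
    (0 < n)%N -> is_Lsubspace C -> linear_on phi C.

(* Main.v *)
Require Import Defs.
From HB Require Import structures.
From mathcomp Require Import all_boot all_order all_algebra all_field.
Local Open Scope ring_scope.
Import GRing.Theory.

Section Aux.
Variables (F : finFieldType) (L : fieldExtType F) (m : nat) (a : m.-tuple L).
Hypothesis ba : basis_of fullv a.

Lemma span_ind (P : L -> Prop) : P 0 ->
  (forall (c : F) u v, P u -> P v -> P (c *: u + v)) ->
  (forall i, P (tnth a i)) -> forall x, P x.
Proof.
move=> P0 PC Pa x; rewrite (coord_basis ba (memvf x)).
apply: (big_ind P) => //.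
  by move=> u v Pu Pv; rewrite -[u]scale1r; apply: PC.
move=> i _; rewrite -[_ *: _]addr0; apply: PC => //.
by rewrite -tnth_nth.
Qed.

Lemma m_gt0 : (0 < m)%N.
Proof.
case: m a ba => // a0 ba0.
have := coord_basis ba0 (memvf (1 : L)); rewrite big_ord0 => /eqP.
by rewrite oner_eq0.
Qed.

End Aux.
Section Q.
Variables (F : finFieldType) (L : fieldExtType F) (m : nat) (a : m.-tuple L).
Hypothesis ba : basis_of fullv a.
Variable phi : {linear L -> L}.

Ltac lin := rewrite ?mulrDl ?mulrDr -?scalerAl -?scalerAr ?linearD ?linearZ /= ?mulrDl ?mulrDr -?scalerAl -?scalerAr.

Lemma quad : (forall i j k l, phi (tnth a i * tnth a j) * phi (tnth a k * tnth a l)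
   = phi (tnth a i * tnth a l) * phi (tnth a k * tnth a j)) ->
  forall x y z w, phi (x * y) * phi (z * w) = phi (x * w) * phi (z * y).
Proof.
move=> H.
have H1 : forall x j k l, phi (x * tnth a j) * phi (tnth a k * tnth a l)
   = phi (x * tnth a l) * phi (tnth a k * tnth a j).
  move=> x j k l; elim/(@span_ind _ _ _ _ ba): x => [|c u v Hu Hv|i]; last exact: H.
    by rewrite !mul0r linear0 !mul0r.
  by lin; rewrite Hu Hv.
have H2 : forall x y k l, phi (x * y) * phi (tnth a k * tnth a l)
   = phi (x * tnth a l) * phi (tnth a k * y).
  move=> x y k l; elim/(@span_ind _ _ _ _ ba): y => [|c u v Hu Hv|j]; last exact: H1.
    by rewrite !mulr0 linear0 !mul0r mulr0.
  by lin; rewrite Hu Hv.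
have H3 : forall x y z l, phi (x * y) * phi (z * tnth a l)
   = phi (x * tnth a l) * phi (z * y).
  move=> x y z l; elim/(@span_ind _ _ _ _ ba): z => [|c u v Hu Hv|k]; last exact: H2.
    by rewrite !mul0r linear0 !mulr0.
  by lin; rewrite Hu Hv.
move=> x y z w; elim/(@span_ind _ _ _ _ ba): w => [|c u v Hu Hv|l]; last exact: H3.
  by rewrite !mulr0 linear0 mulr0 mul0r.
by lin; rewrite Hu Hv.
Qed.
End Q.
Section M.
Variables (F : finFieldType) (L : fieldExtType F).
Variable phi : {linear L -> L}.
Hypothesis bij : bijective phi.

Lemma phi_inj : injective phi. Proof. exact: bij_inj. Qed.
Lemma phi1 : phi 1 != 0.
Proof. by apply/eqP => h; move: (@phi_inj 1 0 (etrans h (esym (linear0 phi)))) => /eqP; rewrite oner_eq0. Qed.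

Lemma fl_mult : fully_linear phi <-> (forall x y, phi (x * y) * phi 1 = phi x * phi y).
Proof.
have p1 := phi1.
split.
  move=> FL x y.
  pose C := fun v : 'rV[L]_2 => v 0 1 = y * v 0 0.
  have Cs : is_Lsubspace C.
    split; first by rewrite /C !mxE mulr0.
    by move=> c u v; rewrite /C !mxE => -> ->; rewrite mulrDr mulrCA.
  have [I0 Icl] := FL 2%N C erefl Cs.
  pose vec t : 'rV[L]_2 := \row_(j < 2) (if j == 0 then t else y * t).
  have Cv : C (vec 1) by rewrite /C !mxE /=.
  have [w Cw Ew] := Icl (phi x / phi 1) _ _ (ex_intro2 _ _ _ Cv erefl) I0.
  have E0 := congr1 (fun M : 'rV[L]_2 => M 0 0) Ew; have E1 := congr1 (fun M : 'rV[L]_2 => M 0 1) Ew.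
  rewrite /= !mxE /= addr0 mulfVK // in E0.
  rewrite /= !mxE /= addr0 Cw in E1.
  have wx := phi_inj _ _ E0; rewrite -wx in E1.
  by rewrite (mulrC x y) -E1 mulrAC divfK // mulr1.
move=> M n C _ [C0 Ccl].
have Mp : forall d z, phi (d * z) = phi d * phi z / phi 1.
  by move=> d z; rewrite -M mulfK.
have [g phig gphi] := bij.
split.
  exists 0 => //; apply/matrixP => i j; rewrite !mxE; exact: (esym (linear0 phi)).
move=> c _ _ [u Cu ->] [v Cv ->].
exists (g (c * phi 1) *: u + v); first exact: Ccl.
apply/matrixP => i j; rewrite !mxE linearD /= Mp gphi mulrAC mulfK //.
Qed.
End M.

Arguments fl_mult {F L phi}.
Arguments phi1 {F L phi}.
Arguments phi_inj {F L phi}.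
Arguments m_gt0 {F L m a}.
Arguments quad {F L m a} ba {phi}.

Theorem mainTheorem2 (F : finFieldType) (L : fieldExtType F) (m : nat)
    (a : m.-tuple L) (phi : {linear L -> L}) :
  basis_of fullv a ->
  bijective phi ->
  (fully_linear phi <->
   \rank (\matrix_(i < m, j < m) phi (tnth a i * tnth a j)) = 1%N).
Proof.
move=> ba bij; apply: iff_trans (fl_mult bij) _.
have p1 := phi1 bij.
set A := \matrix_(i < m, j < m) _.
split.
  move=> M.
  have Mp : forall d z, phi (d * z) = phi d / phi 1 * phi z.
    by move=> d z; rewrite mulrAC -M mulfK.
  pose X := \matrix_(i < m, j < 1) (phi (tnth a i) / phi 1).
  pose B := \matrix_(i < 1, j < m) phi (tnth a j).
  have AXB : A = X *m B.
    by apply/matrixP => i j; rewrite !mxE big_ord1 !mxE Mp.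
  have le1 : (\rank A <= 1)%N by rewrite AXB mulmx_max_rank.
  have ne0 : \rank A != 0%N.
    rewrite mxrank_eq0; apply/eqP => /matrixP /(_ (Ordinal (m_gt0 ba)) (Ordinal (m_gt0 ba))).
    rewrite !mxE => /eqP; rewrite -(linear0 phi) => /eqP /(phi_inj bij) /eqP.
    rewrite mulf_eq0 orbb; apply/negP; apply: (basis_not0 ba); exact: mem_tnth.
  by case: (\rank A) le1 ne0 => [|[|]].
move=> rk1.
have : exists (X : 'M[L]_(m, \rank A)) (B : 'M[L]_(\rank A, m)), A = X *m B.
  exists (A *m pinvmx (row_base A)), (row_base A).
  by rewrite mulmxKpV // eq_row_base.
rewrite rk1 => -[X [B E]].
have Aij : forall i j, phi (tnth a i * tnth a j) = X i 0 * B 0 j.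
  by move=> i j; have := congr1 (fun M : 'M[L]_m => M i j) E; rewrite /= !mxE big_ord1.
have H : forall i j k l, phi (tnth a i * tnth a j) * phi (tnth a k * tnth a l)
   = phi (tnth a i * tnth a l) * phi (tnth a k * tnth a j).
  move=> i j k l; rewrite !Aij.
  by rewrite -!mulrA; congr (_ * _); rewrite (mulrCA (B 0 j)) (mulrCA (B 0 l)) (mulrC (B 0 j)).
move=> x y; have := quad ba H x y 1 1.
by rewrite !mulr1 mul1r.
Qed.
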